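(* Let $\varepsilon>0$ and let $f,g:(0,\infty)\to\mathbb R$ be positive functions such that $g$ is non-decreasing and $\lim_{t\to0^+}f(t)=0$. Then there exists a family of sets $S(\rho)\subset\mathbb R$, $\rho\in(0,\infty)$, such that (1) $S(\tau)\subset S(\rho)$ for all $0<\tau\le\rho$; (2) for every $\rho\in(0,\infty)$ there exist $P,Q\in\mathbb R$ with $S(\rho)\subset B(P,g(\rho))\cup B(Q,g(\rho))$; (3) if $A\subset\mathbb R$ is such that for all $0<\rho\le\varepsilon$ and all $P\in S(\rho)$ there exists $Q\in A$ with $|Q-P|\le f(\rho)$, then $A$ is infinite.
   Context: $B(P,t)=\{x\in\mathbb R:|x-P|<t\}$ denotes the open interval of radius $t$ about $P$. *)

(* Defs.v *)
From Stdlib Require Import Reals List.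
Open Scope R_scope.

Definition ball (P t x : R) : Prop := Rabs (x - P) < t.

Definition finite_set (A : R -> Prop) : Prop :=
  exists l : list R, forall x, A x -> In x l.

(* Main.v *)
Require Import Defs.
From Stdlib Require Import Reals List Lra Lia Classical ClassicalEpsilon Wf_nat.
Open Scope R_scope.

Lemma list_gap (l : list R) : exists eta, 0 < eta /\ forall y, In y l -> ~ (- eta < y < 0).
Proof.
  induction l as [|a l [eta [He H]]].
  - exists 1. split; [lra| intros y []].
  - destruct (Rlt_dec a 0) as [Ha|Ha].
    + exists (Rmin eta (- a)). split.
      * apply Rmin_pos; lra.
      * intros y [<-|Hy] Hc.
        -- assert (Rmin eta (-a) <= - a) by apply Rmin_r. lra.
        -- apply (H y Hy). assert (Rmin eta (-a) <= eta) by apply Rmin_l. lra.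
    + exists eta. split; auto. intros y [<-|Hy] Hc; [lra|]. exact (H y Hy Hc).
Qed.

Lemma least_nat (P : nat -> Prop) : (exists n, P n) -> exists n, P n /\ forall m, P m -> (n <= m)%nat.
Proof.
  intros [n Hn].
  destruct (dec_inh_nat_subset_has_unique_least_element P (fun k => classic (P k)) (ex_intro _ n Hn))
    as [k [[Hk1 Hk2] _]].
  exists k. split; auto.
Qed.

Theorem mainTheorem13 (eps : R) (f g : R -> R)
  (Heps : 0 < eps)
  (Hfpos : forall t, 0 < t -> 0 < f t)
  (Hgpos : forall t, 0 < t -> 0 < g t)
  (Hgmono : forall s t, 0 < s -> s <= t -> g s <= g t)
  (Hflim : forall e, 0 < e -> exists d, 0 < d /\
             forall t, 0 < t < d -> Rabs (f t) < e) :
  exists S : R -> R -> Prop,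
    (forall tau rho, 0 < tau -> tau <= rho -> forall x, S tau x -> S rho x) /\
    (forall rho, 0 < rho -> exists P Q : R,
        forall x, S rho x -> ball P (g rho) x \/ ball Q (g rho) x) /\
    (forall A : R -> Prop,
        (forall rho, 0 < rho -> rho <= eps -> forall P, S rho P ->
            exists Q, A Q /\ Rabs (Q - P) <= f rho) ->
        ~ finite_set A).
Proof.
  assert (HD : forall e, exists d, 0 < e -> 0 < d /\ forall t, 0 < t < d -> f t < e).
  { intro e. destruct (Rlt_dec 0 e) as [He|He].
    - destruct (Hflim e He) as [d [Hd Ht]]. exists d. intros _. split; auto.
      intros t Ht'. specialize (Ht t Ht'). pose proof (Rle_abs (f t)). lra.
    - exists 0. intro; lra. }
  set (D := fun e => proj1_sig (constructive_indefinite_description _ (HD e))).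
  assert (HDs : forall e, 0 < e -> 0 < D e /\ forall t, 0 < t < D e -> f t < e).
  { intro e. unfold D. destruct (constructive_indefinite_description _ (HD e)) as [d Hd]. exact Hd. }
  set (F := fix F (n : nat) : R * R := match n with
        | O => (1, Rmin eps (D 1) / 2)
        | S k => let h' := Rmin (fst (F k)) (g (snd (F k))) / 2 in
                 (h', Rmin (snd (F k)) (D h') / 2) end).
  set (h := fun n => fst (F n)). set (r := fun n => snd (F n)).
  assert (Hinv : forall n, 0 < h n /\ 0 < r n /\ r n <= eps /\ f (r n) < h n).
  { induction n as [|n [H1 [H2 [H3 H4]]]].
    - unfold h, r; simpl. destruct (HDs 1 ltac:(lra)) as [Hd1 Hd2].
      assert (Rmin eps (D 1) <= eps) by apply Rmin_l.
      assert (Rmin eps (D 1) <= D 1) by apply Rmin_r.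
      assert (0 < Rmin eps (D 1)) by (apply Rmin_pos; lra).
      repeat split; try lra. apply Hd2. lra.
    - unfold h, r in *; simpl. fold (h n) (r n) in *.
      set (h' := Rmin (h n) (g (r n)) / 2).
      assert (Hh' : 0 < h') by (unfold h'; pose proof (Hgpos _ H2); pose proof (Rmin_pos _ _ H1 H); lra).
      destruct (HDs h' Hh') as [Hd1 Hd2].
      assert (Rmin (r n) (D h') <= r n) by apply Rmin_l.
      assert (Rmin (r n) (D h') <= D h') by apply Rmin_r.
      assert (0 < Rmin (r n) (D h')) by (apply Rmin_pos; lra).
      repeat split; try lra. apply Hd2. lra. }
  assert (Hstep : forall n, h (S n) <= h n / 2 /\ h (S n) < g (r n) /\ r (S n) < r n).
  { intro n. destruct (Hinv n) as [H1 [H2 _]].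
    unfold h, r; simpl. fold (h n) (r n).
    pose proof (Hgpos _ H2).
    assert (Rmin (h n) (g (r n)) <= h n) by apply Rmin_l.
    assert (Rmin (h n) (g (r n)) <= g (r n)) by apply Rmin_r.
    assert (Rmin (r n) (D (Rmin (h n) (g (r n)) / 2)) <= r n) by apply Rmin_l.
    repeat split; lra. }
  assert (Hhdec : forall n m, (n <= m)%nat -> h m <= h n).
  { intros n m Hnm. induction Hnm; [lra|].
    destruct (Hstep m) as [Ha _]. destruct (Hinv m) as [Hb _]. lra. }
  assert (Hrdec : forall n m, (n <= m)%nat -> r m <= r n).
  { intros n m Hnm. induction Hnm; [lra|].
    destruct (Hstep m) as [_ [_ Ha]]. lra. }
  assert (Hhbound : forall n, h n * (INR n + 1) <= 1).
  { induction n.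
    - unfold h; simpl. lra.
    - rewrite S_INR. destruct (Hstep n) as [Ha _]. destruct (Hinv n) as [Hb _].
      destruct (Hinv (S n)) as [Hc _]. pose proof (pos_INR n). nra. }
  exists (fun rho x => exists n, r n <= rho /\ x = - h n).
  split; [|split].
  - intros tau rho Ht Htr x [n [Hn Hx]]. exists n. split; [lra|auto].
  - intros rho Hrho.
    destruct (classic (exists n, r n <= rho)) as [Hex|Hnex].
    + destruct (least_nat _ Hex) as [N [HN HNmin]].
      exists (- h N), 0. intros x [m [Hm ->]].
      assert (HNm : (N <= m)%nat) by (apply HNmin; auto).
      destruct (Nat.eq_dec m N) as [->|Hne].
      * left. unfold ball. replace (- h N - - h N) with 0 by ring. rewrite Rabs_R0.
        apply Hgpos; auto.
      * right. unfold ball. replace (- h m - 0) with (- h m) by ring.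
        destruct (Hinv m) as [Hm0 _]. rewrite Rabs_Ropp, Rabs_right by lra.
        assert (h m <= h (S N)) by (apply Hhdec; lia).
        destruct (Hstep N) as [_ [Hg _]]. destruct (Hinv N) as [_ [HrN _]].
        pose proof (Hgmono (r N) rho HrN HN). lra.
    + exists 0, 0. intros x [n [Hn _]]. exfalso. apply Hnex. eauto.
  - intros A HA [l Hl].
    destruct (list_gap l) as [eta [Heta Hgap]].
    destruct (archimed_cor1 (eta / 2) ltac:(lra)) as [N [HN HN0]].
    destruct (Hinv N) as [H1 [H2 [H3 H4]]].
    destruct (HA (r N) H2 H3 (- h N) ltac:(exists N; split; [lra|auto])) as [Q [HQ HQd]].
    apply (Hgap Q (Hl Q HQ)).
    assert (Hb := Hhbound N).
    assert (HINR : 0 < INR N) by (apply lt_0_INR; lia).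
    assert (h N < eta / 2).
    { assert (h N * INR N <= 1) by nra.
      assert (h N <= / INR N).
      { apply (Rmult_le_reg_r (INR N)); auto. rewrite Rinv_l by lra. lra. }
      lra. }
    replace (Q - - h N) with (Q + h N) in HQd by ring.
    destruct (Rcase_abs (Q + h N)) as [Hn|Hn];
      [rewrite Rabs_left in HQd by lra | rewrite Rabs_right in HQd by lra]; lra.
Qed.
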